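(* Let $G$ be a finite abelian group of order $N$. Then for every integer $m$ with $1 \leq m \leq N/2$, \[\rho_\pm(G, m, 2) \geq \min\{\rho_G^-(m),\ \rho_G^-(2m) - 1\}.\]
   Context: For subsets $A, B$ of a finite abelian group $(G,+)$ of order $N$, write $A - B = \{a - b \mid a \in A, b \in B\}$, and for $1 \le r \le N$ let $\rho^-_G(r) = \min \{|A - A| \mid A \subseteq G, |A| = r\}$. For a subset $A = \{a_1, \ldots, a_m\} \subseteq G$ of $m$ distinct elements, the signed sumset $2_\pm A$ is $\{\lambda_1 a_1 + \cdots + \lambda_m a_m \mid \lambda_i \in \mathbb{Z},\ \sum_{i=1}^m |\lambda_i| = 2\}$; equivalently it consists of the elements $\pm 2a$ for $a \in A$ and $\pm a \pm b$ for distinct $a, b \in A$. For $1 \le m \le N$, $\rho_\pm(G, m, 2) = \min\{|2_\pm A| \mid A \subseteq G, |A| = m\}$. *)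

(* Defs.v *)
From mathcomp Require Import all_boot all_order all_algebra.
Set Implicit Arguments. Unset Strict Implicit. Unset Printing Implicit Defensive.
Import GRing.Theory.
Local Open Scope ring_scope.

Definition diffset (G : finZmodType) (A : {set G}) : {set G} :=
  [set a - b | a in A, b in A].

(* rho^-_G(r) = min { |A - A| : A subset of G, |A| = r }.
   (For r > |G| the min ranges over the empty family and defaults to |G|;
   only 1 <= r <= |G| is used.) *)
Definition rho_minus (G : finZmodType) (r : nat) : nat :=
  \big[minn/#|G|]_(A : {set G} | #|A| == r) #|diffset A|.

Definition signed_sumset2 (G : finZmodType) (A : {set G}) : {set G} :=
  [set x | [exists a in A, (x == a + a) || (x == - (a + a))]
        || [exists a in A, exists b in A,
              (a != b) && [|| x == a + b, x == a - b, x == - a + b | x == - a - b]]].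

Definition rho_pm2 (G : finZmodType) (m : nat) : nat :=
  \big[minn/#|G|]_(A : {set G} | #|A| == m) #|signed_sumset2 A|.

(* Main.v *)
Require Import Defs.
From mathcomp Require Import all_boot all_order all_algebra.
Import GRing.Theory.
Local Open Scope ring_scope.

Lemma bigmin_le_my (I : eqType) (r : seq I) (P : pred I) (F : I -> nat) x i :
  i \in r -> P i -> (\big[minn/x]_(j <- r | P j) F j <= F i)%N.
Proof.
elim: r => // a r IH; rewrite inE big_cons => /orP [/eqP <-|ir] Pi.
  by rewrite Pi geq_minl.
case: (P a); last exact: IH.
by apply: leq_trans (geq_minr _ _) (IH ir Pi).
Qed.

Lemma rho_minus_le (G : finZmodType) (A : {set G}) :
  (rho_minus G #|A| <= #|diffset A|)%N.
Proof.
rewrite /rho_minus; apply: bigmin_le_my => //; exact: mem_index_enum.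
Qed.

Lemma rho_minus_leG (G : finZmodType) r : (rho_minus G r <= #|G|)%N.
Proof.
rewrite /rho_minus; elim/big_ind: _ => //.
  by move=> x y hx hy; rewrite geq_min hx.
by move=> *; exact: max_card.
Qed.

Lemma mem_ss (G : finZmodType) (A : {set G}) a b x :
  a \in A -> b \in A -> [|| x == a + b, x == a - b, x == - a + b | x == - a - b] ->
  x \in 0 |: signed_sumset2 A.
Proof.
move=> aA bA hx.
case: (eqVneq a b) => [eab|ab].
  subst b; rewrite !inE.
  case/or4P: hx => /eqP ->.
  - apply/orP; right; apply/orP; left; apply/existsP; exists a; by rewrite aA eqxx.
  - by rewrite subrr eqxx.
  - by rewrite addNr eqxx.
  - apply/orP; right; apply/orP; left; apply/existsP; exists a.
    by rewrite aA -opprD eqxx orbT.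
rewrite !inE; apply/orP; right; apply/orP; right.
apply/existsP; exists a; rewrite aA /=; apply/existsP; exists b; by rewrite bA ab.
Qed.

Arguments mem_ss {G A a b x}.

Lemma key (G : finZmodType) (A : {set G}) :
  (minn (rho_minus G #|A|) (rho_minus G (#|A|.*2)).-1 <= #|signed_sumset2 A|)%N.
Proof.
case: (boolP (0 \in signed_sumset2 A)) => h0.
  rewrite geq_min; apply/orP; left.
  apply: leq_trans (rho_minus_le _ A) _.
  have sub : diffset A \subset signed_sumset2 A; last exact: subset_leq_card sub.
  apply/subsetP => x /imset2P [a b aA bA ->].
  case: (eqVneq a b) => [->|ab]; first by rewrite subrr.
  rewrite inE; apply/orP; right; apply/existsP; exists a; rewrite aA /=.
  apply/existsP; exists b; rewrite bA ab /=; by rewrite eqxx orbT.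
rewrite geq_min; apply/orP; right.
set B := A :|: [set - a | a in A].
have disj : [disjoint A & [set - a | a in A]].
  apply/pred0P => x /=; apply/negbTE/negP => /andP [xA /imsetP [a aA xe]].
  move: h0; rewrite inE negb_or => /andP [h1 h2].
  case: (eqVneq x a) => [xa|xa].
    move/negP: h1; apply; apply/existsP; exists x; rewrite xA /=.
    apply/orP; left; apply/eqP.
    by rewrite {1}xe xa addNr.
  move/negP: h2; apply; apply/existsP; exists x; rewrite xA /=.
  apply/existsP; exists a; rewrite aA xa /=.
  by rewrite xe addNr eqxx.
have cB : #|B| = (#|A|.*2)%N.
  rewrite cardsU (disjoint_setI0 disj) cards0 subn0 card_imset ?addnn //.
  exact: oppr_inj.
have sub : diffset B \subset 0 |: signed_sumset2 A.
  apply/subsetP => x /imset2P [u v].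
  rewrite inE => /orP [uA | /imsetP [a aA ->]];
  rewrite inE => /orP [vA | /imsetP [b bA ->]] ->.
  - by apply: (mem_ss uA vA); rewrite eqxx orbT.
  - by apply: (mem_ss uA bA); rewrite opprK eqxx.
  - by apply: (mem_ss aA vA); rewrite eqxx !orbT.
  - by apply: (mem_ss aA bA); rewrite opprK eqxx !orbT.
have h1 := rho_minus_le _ B.
have h2 := subset_leq_card sub.
rewrite cardsU1 in h2.
rewrite cB in h1.
move: h1 h2; case: (0 \notin _) => /=; case: (rho_minus _ _) => //= n h1 h2.
  by move: (leq_trans h1 h2); rewrite add1n ltnS.
by move: (leq_trans h1 h2); rewrite add0n; apply: ltnW.
Qed.

Theorem mainTheorem9 (G : finZmodType) (m : nat) :
  (1 <= m)%N -> (m.*2 <= #|G|)%N ->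
  (minn (rho_minus G m) (rho_minus G m.*2).-1 <= rho_pm2 G m)%N.
Proof.
move=> _ _; rewrite /rho_pm2; elim/big_ind: _.
- rewrite geq_min; apply/orP; left; exact: rho_minus_leG.
- by move=> x y hx hy; rewrite leq_min hx.
- by move=> A /eqP <-; exact: key.
Qed.
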